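(* Let $(\mathcal{A},\mu,\alpha)$ be a multiplicative Hom-alternative superalgebra. Define, for homogeneous $t,x,y,z$, $f(t,x,y,z)=\widetilde{as}(tx,\alpha(y),\alpha(z))-(-1)^{|t|(|x|+|y|+|z|)}\widetilde{as}(x,y,z)\alpha^{2}(t)-(-1)^{|t||x|}\alpha^{2}(x)\widetilde{as}(t,y,z)$, $F(t,x,y,z)=[\alpha^{2}(t),\widetilde{as}(x,y,z)]-(-1)^{|z|(|t|+|x|+|y|)}[\alpha^{2}(z),\widetilde{as}(t,x,y)]+(-1)^{(|t|+|x|)(|y|+|z|)}[\alpha^{2}(y),\widetilde{as}(z,t,x)]-(-1)^{|t|(|x|+|y|+|z|)}[\alpha^{2}(x),\widetilde{as}(y,z,t)]$. Then $F(t,x,y,z)=f(t,x,y,z)-(-1)^{|t|(|x|+|y|+|z|)}f(x,y,z,t)+(-1)^{(|t|+|x|)(|z|+|y|)}f(y,z,t,x)$.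
   Context: $\mathcal{A}=\mathcal{A}_0\oplus\mathcal{A}_1$ is a $\mathbb{Z}_2$-graded vector space over an algebraically closed field $\mathbb{K}$ of characteristic $0$; $|x|$ is the parity of homogeneous $x$; we write $\mu(x,y)=xy$, $\mu$ even bilinear, $\alpha$ even linear; $[a,b]=ab-(-1)^{|a||b|}ba$ is the super-commutator. $\widetilde{as}(x,y,z)=(xy)\alpha(z)-\alpha(x)(yz)$. A Hom-alternative superalgebra is a triple $(\mathcal{A},\mu,\alpha)$ with $\widetilde{as}(x,y,z)+(-1)^{|x||y|}\widetilde{as}(y,x,z)=0$ and $\widetilde{as}(x,y,z)+(-1)^{|y||z|}\widetilde{as}(x,z,y)=0$ for homogeneous $x,y,z$; multiplicative means $\alpha(xy)=\alpha(x)\alpha(y)$. *)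

(* Defs.v *)
From HB Require Import structures.
From mathcomp Require Import all_boot all_order all_algebra.
Set Implicit Arguments. Unset Strict Implicit. Unset Printing Implicit Defensive.
Import Order.TTheory GRing.Theory Num.Theory.
Local Open Scope ring_scope.

Section SuperDefs.
Variables (K : fieldType) (A : lmodType K).

Definition is_subspace (P : {pred A}) : Prop :=
  0 \in P /\ forall (a : K) (u v : A), u \in P -> v \in P -> a *: u + v \in P.

Definition is_Z2_grading (A0 A1 : {pred A}) : Prop :=
  [/\ is_subspace A0, is_subspace A1,
      (forall x : A, exists x0 x1, [/\ x0 \in A0, x1 \in A1 & x = x0 + x1])
    & (forall x : A, x \in A0 -> x \in A1 -> x = 0)].

(* x is homogeneous of parity p (false = even, true = odd) *)
Definition homog (A0 A1 : {pred A}) (p : bool) (x : A) : Prop :=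
  x \in (if p then A1 else A0).

Definition sgn (n : nat) : K := (-1) ^+ n.

Definition is_bilinear (mu : A -> A -> A) : Prop :=
  (forall (a : K) x y z, mu (a *: x + y) z = a *: mu x z + mu y z) /\
  (forall (a : K) x y z, mu z (a *: x + y) = a *: mu z x + mu z y).

Definition is_linear_map (f : A -> A) : Prop :=
  forall (a : K) x y, f (a *: x + y) = a *: f x + f y.

Definition even_bilinear (A0 A1 : {pred A}) (mu : A -> A -> A) : Prop :=
  forall p q x y, homog A0 A1 p x -> homog A0 A1 q y ->
    homog A0 A1 (p (+) q) (mu x y).

Definition even_map (A0 A1 : {pred A}) (f : A -> A) : Prop :=
  forall p x, homog A0 A1 p x -> homog A0 A1 p (f x).

Definition hom_as (mu : A -> A -> A) (alpha : A -> A) (x y z : A) : A :=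
  mu (mu x y) (alpha z) - mu (alpha x) (mu y z).

Definition scomm (mu : A -> A -> A) (pa pb : nat) (a b : A) : A :=
  mu a b - sgn (pa * pb) *: mu b a.

Definition is_hom_alternative_superalgebra (A0 A1 : {pred A})
    (mu : A -> A -> A) (alpha : A -> A) : Prop :=
  [/\ is_Z2_grading A0 A1, is_bilinear mu, even_bilinear A0 A1 mu,
      is_linear_map alpha & even_map A0 A1 alpha] /\
  ((forall (px py pz : bool) x y z,
         homog A0 A1 px x -> homog A0 A1 py y -> homog A0 A1 pz z ->
         hom_as mu alpha x y z + sgn (px * py) *: hom_as mu alpha y x z = 0) /\
   (forall (px py pz : bool) x y z,
         homog A0 A1 px x -> homog A0 A1 py y -> homog A0 A1 pz z ->
         hom_as mu alpha x y z + sgn (py * pz) *: hom_as mu alpha x z y = 0)).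

Definition hom_multiplicative (mu : A -> A -> A) (alpha : A -> A) : Prop :=
  forall x y, alpha (mu x y) = mu (alpha x) (alpha y).

Definition f_fun (mu : A -> A -> A) (alpha : A -> A)
    (pt px py pz : nat) (t x y z : A) : A :=
  hom_as mu alpha (mu t x) (alpha y) (alpha z)
  - sgn (pt * (px + py + pz)) *: mu (hom_as mu alpha x y z) (alpha (alpha t))
  - sgn (pt * px) *: mu (alpha (alpha x)) (hom_as mu alpha t y z).

Definition F_fun (mu : A -> A -> A) (alpha : A -> A)
    (pt px py pz : nat) (t x y z : A) : A :=
  scomm mu pt (px + py + pz) (alpha (alpha t)) (hom_as mu alpha x y z)
  - sgn (pz * (pt + px + py)) *:
      scomm mu pz (pt + px + py) (alpha (alpha z)) (hom_as mu alpha t x y)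
  + sgn ((pt + px) * (py + pz)) *:
      scomm mu py (pz + pt + px) (alpha (alpha y)) (hom_as mu alpha z t x)
  - sgn (pt * (px + py + pz)) *:
      scomm mu px (py + pz + pt) (alpha (alpha x)) (hom_as mu alpha y z t).

End SuperDefs.

(* Main.v *)
Require Import Defs.
From HB Require Import structures.
From mathcomp Require Import all_boot all_order all_algebra.
Import GRing.Theory.
Local Open Scope ring_scope.

Inductive zexp := ZAtom of nat | ZZero | ZAdd of zexp & zexp | ZOpp of zexp.

Section Abel.
Variable V : zmodType.
Fixpoint zeval (env : seq V) e : V :=
  match e with
  | ZAtom n => nth 0 env n
  | ZZero => 0
  | ZAdd a b => zeval env a + zeval env b
  | ZOpp a => - zeval env a
  end.
Fixpoint addl (l1 l2 : seq int) : seq int :=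
  match l1, l2 with
  | [::], l => l
  | l, [::] => l
  | a :: l1', b :: l2' => (a + b) :: addl l1' l2'
  end.
Fixpoint znorm e : seq int :=
  match e with
  | ZAtom n => ncons n 0 [:: 1]
  | ZZero => [::]
  | ZAdd a b => addl (znorm a) (znorm b)
  | ZOpp a => map (fun c => - c) (znorm a)
  end.
Fixpoint evaln (env : seq V) (l : seq int) : V :=
  match l with
  | [::] => 0
  | c :: l' => (head 0 env) *~ c + evaln (behead env) l'
  end.
Lemma evaln_add env l1 l2 : evaln env (addl l1 l2) = evaln env l1 + evaln env l2.
Proof.
elim: l1 l2 env => [|a l1 IH] [|b l2] env /=; rewrite ?add0r ?addr0 //.
by rewrite IH mulrzDr addrACA.
Qed.
Lemma evaln_opp env l : evaln env (map (fun c => - c) l) = - evaln env l.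
Proof. by elim: l env => [|a l IH] env /=; rewrite ?oppr0 // IH mulrNz opprD. Qed.
Lemma evaln_atom env n : evaln env (ncons n 0 [:: 1]) = nth 0 env n.
Proof.
elim: n env => [|n IH] [|v env] /=; rewrite ?mulr0z ?add0r ?addr0 //.
all: by rewrite ?IH ?nth_nil.
Qed.
Lemma znorm_ok env e : zeval env e = evaln env (znorm e).
Proof.
elim: e => [n||a IHa b IHb|a IH] /=.
- by rewrite evaln_atom.
- by [].
- by rewrite evaln_add IHa IHb.
- by rewrite evaln_opp IH.
Qed.
Lemma evaln0 env l : all (fun c => c == 0) l -> evaln env l = 0.
Proof.
elim: l env => [|a l IH] env //= /andP[/eqP -> H].
by rewrite mulr0z add0r IH.
Qed.
Lemma zabel env e1 e2 :
  all (fun c => c == 0) (znorm (ZAdd e1 (ZOpp e2))) -> zeval env e1 = zeval env e2.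
Proof.
move=> H; apply/eqP; rewrite -subr_eq0.
have := znorm_ok env (ZAdd e1 (ZOpp e2)) => /= ->.
by rewrite evaln0.
Qed.
End Abel.

Ltac zlookup x env :=
  match env with
  | (x :: _) => constr:(0%N)
  | (_ :: ?env') => let n := zlookup x env' in constr:(S n)
  end.
Ltac zatoms t acc :=
  match t with
  | (?a + ?b)%R => let acc := zatoms a acc in zatoms b acc
  | (- ?a)%R => zatoms a acc
  | 0%R => acc
  | _ => match acc with
         | context [t] => acc
         | _ => constr:(t :: acc)
         end
  end.
Ltac zreify t env :=
  match t with
  | (?a + ?b)%R => let ra := zreify a env in let rb := zreify b env in constr:(ZAdd ra rb)
  | (- ?a)%R => let ra := zreify a env in constr:(ZOpp ra)
  | 0%R => constr:(ZZero)
  | _ => let n := zlookup t env in constr:(ZAtom n)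
  end.
Ltac abel :=
  match goal with
  | |- ?l = ?r =>
    let T := type of l in
    let env := zatoms l (@nil T) in
    let env := zatoms r env in
    let el := zreify l env in
    let er := zreify r env in
    change (zeval _ env el = zeval _ env er);
    apply: zabel; vm_compute; reflexivity
  end.


Set Implicit Arguments.
Section Main.
Variables (K : fieldType) (A : lmodType K) (A0 A1 : {pred A})
  (mu : A -> A -> A) (alpha : A -> A).
Hypothesis hA : is_hom_alternative_superalgebra A0 A1 mu alpha.
Hypothesis hmult : hom_multiplicative mu alpha.

Lemma muDl u v w : mu (u + v) w = mu u w + mu v w.
Proof. case: hA => [[_ [hL _] _ _ _] _]; by have := hL 1 u v w; rewrite !scale1r. Qed.
Lemma muDr u v w : mu w (u + v) = mu w u + mu w v.
Proof. case: hA => [[_ [_ hR] _ _ _] _]; by have := hR 1 u v w; rewrite !scale1r. Qed.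
Lemma mu0l w : mu 0 w = 0.
Proof. apply: (@addrI _ (mu 0 w)); by rewrite -muDl !addr0. Qed.
Lemma mu0r w : mu w 0 = 0.
Proof. apply: (@addrI _ (mu w 0)); by rewrite -muDr !addr0. Qed.
Lemma muZl a u w : mu (a *: u) w = a *: mu u w.
Proof. case: hA => [[_ [hL _] _ _ _] _]; by rewrite -[a *: u]addr0 hL mu0l addr0. Qed.
Lemma muZr a u w : mu w (a *: u) = a *: mu w u.
Proof. case: hA => [[_ [_ hR] _ _ _] _]; by rewrite -[a *: u]addr0 hR mu0r addr0. Qed.
Lemma muNl u w : mu (- u) w = - mu u w.
Proof. by rewrite -scaleN1r muZl scaleN1r. Qed.
Lemma muNr u w : mu w (- u) = - mu w u.
Proof. by rewrite -scaleN1r muZr scaleN1r. Qed.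
Lemma muBl u v w : mu (u - v) w = mu u w - mu v w.
Proof. by rewrite muDl muNl. Qed.
Lemma muBr u v w : mu w (u - v) = mu w u - mu w v.
Proof. by rewrite muDr muNr. Qed.

Lemma teich t x y z :
  hom_as mu alpha (mu t x) (alpha y) (alpha z) =
  hom_as mu alpha (alpha t) (mu x y) (alpha z)
  - hom_as mu alpha (alpha t) (alpha x) (mu y z)
  + mu (alpha (alpha t)) (hom_as mu alpha x y z)
  + mu (hom_as mu alpha t x y) (alpha (alpha z)).
Proof. rewrite /hom_as !muBl !muBr !hmult. abel. Qed.

Lemma skew12 (pu pv pw : bool) u v w :
  homog A0 A1 pu u -> homog A0 A1 pv v -> homog A0 A1 pw w ->
  hom_as mu alpha u v w = (- sgn K (pu * pv)) *: hom_as mu alpha v u w.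
Proof.
case: hA => _ [h1 _] hu hv hw; move/eqP: (h1 _ _ _ _ _ _ hu hv hw).
by rewrite addr_eq0 scaleNr => /eqP.
Qed.
Lemma skew23 (pu pv pw : bool) u v w :
  homog A0 A1 pu u -> homog A0 A1 pv v -> homog A0 A1 pw w ->
  hom_as mu alpha u v w = (- sgn K (pv * pw)) *: hom_as mu alpha u w v.
Proof.
case: hA => _ [_ h2] hu hv hw; move/eqP: (h2 _ _ _ _ _ _ hu hv hw).
by rewrite addr_eq0 scaleNr => /eqP.
Qed.
End Main.

Lemma sgnE (K : fieldType) n : sgn K n = if odd n then -1 else 1.
Proof. by rewrite /sgn -signr_odd; case: (odd n); rewrite ?expr1 ?expr0. Qed.

Theorem mainTheorem15 (K : closedFieldType) (hK : [pchar K] =i pred0)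
    (A : lmodType K) (A0 A1 : {pred A}) (mu : A -> A -> A) (alpha : A -> A)
    (hA : is_hom_alternative_superalgebra A0 A1 mu alpha)
    (hmult : hom_multiplicative mu alpha)
    (pt px py pz : bool) (t x y z : A)
    (ht : homog A0 A1 pt t) (hx : homog A0 A1 px x)
    (hy : homog A0 A1 py y) (hz : homog A0 A1 pz z) :
  F_fun mu alpha pt px py pz t x y z =
  f_fun mu alpha pt px py pz t x y z
  - sgn K (pt * (px + py + pz)) *: f_fun mu alpha px py pz pt x y z t
  + sgn K ((pt + px) * (pz + py)) *: f_fun mu alpha py pz pt px y z t x.
Proof.
have hal : even_map A0 A1 alpha by case: hA => [[]].
have hmu : even_bilinear A0 A1 mu by case: hA => [[]].
have hat := hal _ _ ht; have hax := hal _ _ hx.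
have hay := hal _ _ hy; have haz := hal _ _ hz.
have hxy := hmu _ _ _ _ hx hy; have hyz := hmu _ _ _ _ hy hz.
rewrite /F_fun /f_fun /scomm (teich hA hmult).
rewrite (skew12 hA ht hy hz) (skew23 hA hy ht hz).
rewrite (skew23 hA hxy haz hat) (skew12 hA hxy hat haz).
rewrite (skew12 hA hx hz ht) (skew23 hA hz hx ht).
rewrite (skew12 hA hyz hat hax) (skew23 hA hat hyz hax).
rewrite (skew12 hA hy ht hx) (skew23 hA ht hy hx).
rewrite ?(muZl hA) ?(muZr hA).
clear -hA.
case: pt; case: px; case: py; case: pz;
  rewrite !sgnE /= ?opprK ?scale1r ?scaleN1r ?opprK; abel.
Qed.
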